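(* Let $l\in\mathbb{N}$ and let $(e^i_n)_{i=1,n\in\mathbb{N}}^l$ be a plegma spreading sequence in a Banach space such that, for each $1\le i\le l$, the sequence $(e^i_n)_n$ is unconditional. Then the whole family $(e^i_n)_{i=1,n\in\mathbb{N}}^l$ is an unconditional sequence.
   Context: For $k\in\mathbb{N}$, $[\mathbb{N}]^k$ denotes the $k$-element subsets of $\mathbb{N}$, each identified with its increasing enumeration $s(1)<\cdots<s(k)$. A plegma family in $[\mathbb{N}]^k$ is a finite sequence $(s_i)_{i=1}^l$ in $[\mathbb{N}]^k$ with (i) $s_{i_1}(j_1)<s_{i_2}(j_2)$ for all $1\le j_1<j_2\le k$ and all $1\le i_1,i_2\le l$, and (ii) $s_{i_1}(j)\le s_{i_2}(j)$ for all $1\le i_1<i_2\le l$ and $1\le j\le k$. For such $s=(s_i)_{i=1}^l$ and a vector $x=\sum_{(i,j)\in F}a_{ij}e^i_j$ with $F\subset\{1,\ldots,l\}\times\{1,\ldots,k\}$, the plegma shift of $x$ is $s(x)=\sum_{(i,j)\in F}a_{ij}e^i_{s_i(j)}$. A sequence $(e^i_n)_{i=1,n\in\mathbb{N}}^l$ in a Banach space is plegma spreading if each $(e^i_n)_n$ is a normalized Schauder basic sequence and, for every $x\in\mathrm{span}\{e^i_n\}$, $\|x\|=\|s(x)\|$ for every plegma shift $s(x)$ of $x$ (for every $k$ and every plegma family $s$ in $[\mathbb{N}]^k$ for which it is defined). *)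

(* Defs.v *)
From HB Require Import structures.
From mathcomp Require Import all_boot all_order all_algebra.
From mathcomp Require Import all_classical all_reals all_analysis.
Set Implicit Arguments. Unset Strict Implicit. Unset Printing Implicit Defensive.
Import Order.TTheory GRing.Theory Num.Theory.
Import numFieldNormedType.Exports.
Local Open Scope classical_set_scope.
Local Open Scope ring_scope.

Section Defs.
Variables (R : realType) (V : normedModType R).

Definition lin_span (x : nat -> V) : set V :=
  [set y | exists (n : nat) (a : nat -> R), y = \sum_(k < n) a k *: x k].

Definition schauder_basic (x : nat -> V) : Prop :=
  forall y, closure (lin_span x) y ->
    exists! a : nat -> R, (fun n => \sum_(k < n) a k *: x k) @ \oo --> y.

Definition normalized (x : nat -> V) : Prop := forall n, `|x n| = 1.

Definition unconditional (I : eqType) (x : I -> V) : Prop :=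
  (forall i, x i != 0) /\
  exists C : R, forall (s : seq I) (a eps : I -> R), uniq s ->
    (forall i, eps i = 1 \/ eps i = -1) ->
    `|\sum_(i <- s) (eps i * a i) *: x i| <= C * `|\sum_(i <- s) a i *: x i|.

End Defs.

(* A plegma family (s_i)_{i<l} in [N]^k, s_i given by its increasing
   enumeration s i : 'I_k -> nat (0-based indices). *)
Definition plegma_family (l k : nat) (s : 'I_l -> 'I_k -> nat) : Prop :=
  (forall i (j1 j2 : 'I_k), (j1 < j2)%N -> (s i j1 < s i j2)%N) /\
  (forall (i1 i2 : 'I_l) (j1 j2 : 'I_k), (j1 < j2)%N -> (s i1 j1 < s i2 j2)%N) /\
  (forall (i1 i2 : 'I_l) (j : 'I_k), (i1 < i2)%N -> (s i1 j <= s i2 j)%N).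

Definition plegma_spreading (R : realType) (V : normedModType R) (l : nat)
    (e : 'I_l -> nat -> V) : Prop :=
  (forall i, normalized (e i) /\ schauder_basic (e i)) /\
  forall (k : nat) (s : 'I_l -> 'I_k -> nat) (a : 'I_l -> 'I_k -> R),
    plegma_family s ->
    `|\sum_(i < l) \sum_(j < k) a i j *: e i j| =
    `|\sum_(i < l) \sum_(j < k) a i j *: e i (s i j)|.

(* Main.v *)
Require Import Defs.
From HB Require Import structures.
From mathcomp Require Import all_boot all_order all_algebra.
From mathcomp Require Import all_classical all_reals all_analysis.
Import numFieldNormedType.Exports.
From mathcomp Require Import zify lra.
Import Order.TTheory GRing.Theory Num.Theory.
Local Open Scope ring_scope.

Lemma plegma_lin (l k : nat) (g : 'I_l -> nat) :
  (forall i, (g i <= l)%N) -> (forall i1 i2 : 'I_l, (i1 < i2)%N -> (g i1 <= g i2)%N) ->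
  plegma_family (fun (i : 'I_l) (j : 'I_k) => l.+1 * j + g i)%N.
Proof.
move=> Hg Hm.
have Hc : forall j1 j2 : nat, (j1 < j2)%N -> (l.+1 * j1 + l.+1 <= l.+1 * j2)%N.
  by move=> j1 j2 H; rewrite addnC -mulnS leq_mul2l H orbT.
split; [|split].
- move=> i j1 j2 /Hc; have := Hg i; lia.
- move=> i1 i2 j1 j2 /Hc; have := Hg i1; have := Hg i2; lia.
- move=> i1 i2 j /Hm; lia.
Qed.

Lemma divmod_lin (l j r : nat) : (r < l.+1)%N ->
  ((l.+1 * j + r) %/ l.+1 = j)%N /\ ((l.+1 * j + r) %% l.+1 = r)%N.
Proof.
move=> Hr; rewrite mulnC; split.
- by rewrite divnMDl // divn_small // addn0.
- by rewrite modnMDl modn_small.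
Qed.

Lemma sum_iota_ord (V : zmodType) (N : nat) (F : nat -> V) :
  \sum_(j <- iota 0 N) F j = \sum_(j < N) F j.
Proof. by rewrite -(big_mkord xpredT) /index_iota subn0. Qed.

Lemma sum_only (V : zmodType) (l : nat) (i0 : 'I_l) (G : 'I_l -> V) :
  (forall i, i != i0 -> G i = 0) -> \sum_(i < l) G i = G i0.
Proof. by move=> H; rewrite (bigD1 i0) //= big1 ?addr0. Qed.

Lemma row_bound (R : realType) (V : normedModType R) (l : nat)
  (e : 'I_l -> nat -> V)
  (Hpl : forall (k : nat) (s : 'I_l -> 'I_k -> nat) (a : 'I_l -> 'I_k -> R),
    plegma_family s ->
    `|\sum_(i < l) \sum_(j < k) a i j *: e i j| =
    `|\sum_(i < l) \sum_(j < k) a i j *: e i (s i j)|)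
  (i0 : 'I_l) (C : R) (C0 : 0 <= C)
  (HC : forall (s : seq nat) (a eps : nat -> R), uniq s ->
    (forall i, eps i = 1 \/ eps i = -1) ->
    `|\sum_(i <- s) (eps i * a i) *: e i0 i| <= C * `|\sum_(i <- s) a i *: e i0 i|)
  (N : nat) (B : 'I_l -> nat -> R) :
  `|\sum_(j < N) B i0 j *: e i0 j| <=
    (1 + C) * `|\sum_(i < l) \sum_(j < N) B i j *: e i j|.
Proof.
set x := \sum_(i < l) _.
pose m (j : nat) := (l.+1 * j + i0)%N.
have Hi0 : (i0 < l)%N by [].
have Hs := Hpl N (fun i (j : 'I_N) => (l.+1 * j + i)%N) (fun i (j : 'I_N) => B i j)
  (@plegma_lin l N (fun i => nat_of_ord i) (fun i => ltnW (ltn_ord i)) (fun i1 i2 h => ltnW h)).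
have Ht := Hpl N (fun i (j : 'I_N) => (l.+1 * j + (i + (i == i0)))%N) (fun i (j : 'I_N) => B i j)
  (@plegma_lin l N (fun i => (i + (i == i0))%N)
     (fun i => ltac:(have := ltn_ord i; case: (i == i0) => /=; lia))
     (fun i1 i2 h => ltac:(move: h; case: (i1 == i0); case: (i2 == i0) => /=; lia))).
pose z := \sum_(i < l) \sum_(j < N) B i j *: e i (l.+1 * j + i)%N.
pose w := \sum_(i < l) \sum_(j < N) B i j *: e i (l.+1 * j + (i + (i == i0)))%N.
rewrite -/x -/z in Hs. rewrite -/x -/w in Ht.
pose P := \sum_(j < N) B i0 j *: e i0 (m j).
pose Q := \sum_(j < N) B i0 j *: e i0 (m j).+1.
have Hzw : z - w = P - Q.
  rewrite /z /w -sumrB (@sum_only _ _ i0).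
    rewrite /P /Q -!sumrB; apply: eq_bigr => j _; rewrite eqxx /m addn1 addnS //.
  move=> i /negPf Hi; rewrite -sumrB big1 // => j _; rewrite Hi addn0 subrr //.
have Hrow : `|\sum_(j < N) B i0 j *: e i0 j| = `|P|.
  have := Hpl N (fun i (j : 'I_N) => (l.+1 * j + i)%N)
    (fun i (j : 'I_N) => if i == i0 then B i0 j else 0)
    (@plegma_lin l N (fun i => nat_of_ord i) (fun i => ltnW (ltn_ord i)) (fun i1 i2 h => ltnW h)).
  rewrite (@sum_only _ _ i0); last by move=> i /negPf Hi; apply: big1 => j _; rewrite Hi scale0r.
  rewrite (@sum_only _ _ i0); last by move=> i /negPf Hi; apply: big1 => j _; rewrite Hi scale0r.
  by rewrite eqxx.
pose S := map m (iota 0 N) ++ map (fun j => (m j).+1) (iota 0 N).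
pose c (n : nat) := if (n %% l.+1 == i0)%N then B i0 (n %/ l.+1)%N else - B i0 (n %/ l.+1)%N.
pose eps (n : nat) : R := if (n %% l.+1 == i0)%N then 1 else -1.
have Hm1 : forall j, ((m j) %/ l.+1 = j)%N /\ ((m j) %% l.+1 = i0)%N.
  by move=> j; apply: divmod_lin; lia.
have Hm2 : forall j, ((m j).+1 %/ l.+1 = j)%N /\ ((m j).+1 %% l.+1 = i0.+1)%N.
  by move=> j; rewrite /m -addnS; apply: divmod_lin; lia.
have HS : uniq S.
  rewrite cat_uniq !map_inj_uniq ?iota_uniq //=.
  - rewrite andbT; apply/hasPn => n /mapP [j _ ->]; apply/negP => /mapP [j' _ Heq].
    have := (Hm2 j).2; rewrite Heq (Hm1 j').2; lia.
  - by move=> j1 j2 /(congr1 (divn^~ l.+1)); rewrite (Hm2 j1).1 (Hm2 j2).1.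
  - by move=> j1 j2 /(congr1 (divn^~ l.+1)); rewrite (Hm1 j1).1 (Hm1 j2).1.
have Heps : forall n, eps n = 1 \/ eps n = -1 by move=> n; rewrite /eps; case: ifP; auto.
have H1 := HC S c eps HS Heps.
have E1 : \sum_(n <- S) c n *: e i0 n = P - Q.
  rewrite big_cat !big_map !sum_iota_ord /P /Q -sumrN; congr (_ + _); apply: eq_bigr => j _;
  rewrite /c ?(Hm1 j).1 ?(Hm1 j).2 ?(Hm2 j).1 ?(Hm2 j).2 ?eqxx //.
  have -> : (i0.+1 == i0)%N = false by lia.
  by rewrite scaleNr.
have E2 : \sum_(n <- S) (eps n * c n) *: e i0 n = P + Q.
  rewrite big_cat !big_map !sum_iota_ord /P /Q; congr (_ + _); apply: eq_bigr => j _;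
  rewrite /c /eps ?(Hm1 j).1 ?(Hm1 j).2 ?(Hm2 j).1 ?(Hm2 j).2 ?eqxx ?mul1r //.
  have -> : (i0.+1 == i0)%N = false by lia.
  by rewrite mulrNN mul1r.
rewrite E1 E2 in H1.
have HPQ : `|P - Q| <= `|x| + `|x|.
  by rewrite -Hzw; apply: le_trans (ler_normB _ _) _; rewrite -Hs -Ht.
have H2 : `|P| + `|P| <= `|P - Q| + `|P + Q|.
  have -> : `|P| + `|P| = `|(P - Q) + (P + Q)|.
    by rewrite addrACA addNr addr0 -mulr2n normrMn mulr2n.
  exact: ler_normD.
rewrite Hrow.
have H3 : C * `|P - Q| <= C * (`|x| + `|x|) by apply: ler_wpM2l.
have := normr_ge0 (P - Q); have := normr_ge0 x; lra.
Qed.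

Lemma seq_to_double (V : zmodType) (l : nat) (g : 'I_l * nat -> V)
  (s : seq ('I_l * nat)) (N : nat) :
  uniq s -> (forall p, p \in s -> (p.2 < N)%N) ->
  \sum_(p <- s) g p =
  \sum_(i < l) \sum_(j < N) (if (i, nat_of_ord j) \in s then g (i, nat_of_ord j) else 0).
Proof.
move=> us Hs.
pose T := [seq (i, j) | i <- enum 'I_l, j <- iota 0 N].
have Hp : perm_eq s [seq p <- T | p \in s].
  apply: uniq_perm => //.
    apply: filter_uniq; apply: allpairs_uniq; rewrite ?enum_uniq ?iota_uniq //.
    by move=> [a b] [c d] _ _ /=.
  move=> [i j]; rewrite mem_filter andbC; case Hij: ((i, j) \in s); rewrite ?andbT ?andbF //.
  apply/esym/allpairsP; exists (i, j); split => //=; first by rewrite mem_enum.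
  by rewrite mem_iota /= add0n; exact: (Hs _ Hij).
rewrite (perm_big _ Hp) big_filter big_mkcond big_allpairs big_enum /=.
by apply: eq_bigr => i _; rewrite sum_iota_ord.
Qed.

Theorem theorem2p16 (R : realType) (V : completeNormedModType R) (l : nat)
    (e : 'I_l -> nat -> V) :
  plegma_spreading e ->
  (forall i : 'I_l, unconditional (e i)) ->
  unconditional (fun p : 'I_l * nat => e p.1 p.2).
Proof.
move=> [_ Hpl] Hu; split; first by move=> p; exact: (Hu p.1).1.
have [Cf HCf] := @choice _ _ (fun i C => forall (s : seq nat) (a eps : nat -> R), uniq s ->
    (forall n, eps n = 1 \/ eps n = -1) ->
    `|\sum_(n <- s) (eps n * a n) *: e i n| <= C * `|\sum_(n <- s) a n *: e i n|)
  (fun i => (Hu i).2).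
have HCf' : forall i (s : seq nat) (a eps : nat -> R), uniq s ->
    (forall n, eps n = 1 \/ eps n = -1) ->
    `|\sum_(n <- s) (eps n * a n) *: e i n| <= `|Cf i| * `|\sum_(n <- s) a n *: e i n|.
  move=> i s a eps us he; apply: le_trans (HCf i s a eps us he) _.
  by apply: ler_wpM2r; [exact: normr_ge0 | exact: ler_norm].
exists (\sum_(i < l) `|Cf i| * (1 + `|Cf i|)).
move=> s a eps us heps.
pose N := (\max_(p <- s) p.2).+1.
have HN : forall p, p \in s -> (p.2 < N)%N.
  by move=> p ps; rewrite ltnS; apply: leq_bigmax_seq.
pose B i j := if (i, j) \in s then a (i, j) else 0.
rewrite (@seq_to_double _ _ _ _ _ us HN) (@seq_to_double _ _ _ _ _ us HN).
have -> : \sum_(i < l) \sum_(j < N)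
   (if (i, nat_of_ord j) \in s then (eps (i, nat_of_ord j) * a (i, nat_of_ord j)) *: e (i, nat_of_ord j).1 (i, nat_of_ord j).2 else 0)
   = \sum_(i < l) \sum_(j < N) (eps (i, nat_of_ord j) * B i j) *: e i j.
  apply: eq_bigr => i _; apply: eq_bigr => j _; rewrite /B; case: ifP => _ //.
  by rewrite mulr0 scale0r.
have -> : \sum_(i < l) \sum_(j < N)
   (if (i, nat_of_ord j) \in s then a (i, nat_of_ord j) *: e (i, nat_of_ord j).1 (i, nat_of_ord j).2 else 0)
   = \sum_(i < l) \sum_(j < N) B i j *: e i j.
  apply: eq_bigr => i _; apply: eq_bigr => j _; rewrite /B; case: ifP => _ //.
  by rewrite scale0r.
apply: le_trans (ler_norm_sum _ _ _) _.
rewrite mulr_suml; apply: ler_sum => i _.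
have H1 := HCf' i (iota 0 N) (B i) (fun n => eps (i, n)) (iota_uniq 0 N) (fun n => heps (i, n)).
rewrite !sum_iota_ord in H1.
apply: le_trans H1 _.
rewrite -mulrA; apply: ler_wpM2l; first exact: normr_ge0.
exact: (@row_bound _ _ _ _ Hpl i `|Cf i| (normr_ge0 _) (HCf' i)).
Qed.
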